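(* If $\|W\|_2^2\le B_W^2$ and $0\le u_i\le B_u$ for all $i$, then the 2-norm of the gradient of $f$ and of each stochastic gradient $\nabla f_{ik}$ is bounded by $$B_f=N\max\{1,e^{B_u}-1\}+2\big(Ne^{B_u}B_x+\mu\max_k\{\beta_k\}B_W\big).$$
   Context: Data: $(y_i,x_i)$, $i=1,\dots,N$, $x_i\in\mathbb{R}^D$, $y_i\in\{1,\dots,K\}$, $K\ge2$; $\mu>0$; $u\in\mathbb{R}^N$, $W=[w_1,\dots,w_K]\in\mathbb{R}^{D\times K}$ with Frobenius norm $\|W\|_2$. Let $n_j=|\{i:y_i=j\}|$, $\beta_j=\frac{N}{n_j+(N-n_j)/(K-1)}$, and for $k\ne y_i$ $$f_{ik}(u,W)=N\big(u_i+e^{-u_i}+(K-1)e^{x_i^\top(w_k-w_{y_i})-u_i}\big)+\tfrac{\mu}{2}\big(\beta_{y_i}\|w_{y_i}\|_2^2+\beta_k\|w_k\|_2^2\big),$$ and $f=\mathbb{E}_{ik}[f_{ik}]$ with $i$ uniform on $\{1,\dots,N\}$ and $k$ uniform on $\{1,\dots,K\}\setminus\{y_i\}$. $B_W^2=\frac{2}{\mu}N\log K$, $B_x=\max_i\|x_i\|_2$, $B_u=\log(1+(K-1)e^{2B_xB_W})$. *)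

(* Defs.v *)
From HB Require Import structures.
From mathcomp Require Import all_boot all_order all_algebra.
From mathcomp Require Import all_classical all_reals all_analysis.
Set Implicit Arguments. Unset Strict Implicit. Unset Printing Implicit Defensive.
Import Order.TTheory GRing.Theory Num.Theory.
Local Open Scope ring_scope.

Section Defs.
Variable R : realType.
Variables (N D K : nat).

(* Parameters: u : R^N as 'I_N -> R, W : R^{D x K} as 'I_D -> 'I_K -> R,
   column k of W is w_k = (W d k)_d.  Data x_i = (x i d)_d, y i : 'I_K. *)

Definition updu (u : 'I_N -> R) (j : 'I_N) (t : R) : 'I_N -> R :=
  fun l => if l == j then t else u l.

Definition updW (W : 'I_D -> 'I_K -> R) (d : 'I_D) (k : 'I_K) (t : R)
  : 'I_D -> 'I_K -> R :=
  fun d' k' => if (d' == d) && (k' == k) then t else W d' k'.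

Definition grad_norm2 (F : ('I_N -> R) -> ('I_D -> 'I_K -> R) -> R)
  (u : 'I_N -> R) (W : 'I_D -> 'I_K -> R) : R :=
  \sum_(j < N) (derive1 (fun t => F (updu u j t) W) (u j)) ^+ 2
  + \sum_(d < D) \sum_(k < K)
      (derive1 (fun t => F u (updW W d k t)) (W d k)) ^+ 2.

Definition grad_norm F u W : R := Num.sqrt (grad_norm2 F u W).

Definition class_count (y : 'I_N -> 'I_K) (j : 'I_K) : nat :=
  #|[set i | y i == j]|.

Definition beta (y : 'I_N -> 'I_K) (j : 'I_K) : R :=
  N%:R / ((class_count y j)%:R + (N - class_count y j)%:R / (K.-1)%:R).

Definition sqnormW (W : 'I_D -> 'I_K -> R) : R :=
  \sum_(d < D) \sum_(k < K) W d k ^+ 2.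

Definition f_ik (mu : R) (x : 'I_N -> 'I_D -> R) (y : 'I_N -> 'I_K)
  (i : 'I_N) (k : 'I_K) (u : 'I_N -> R) (W : 'I_D -> 'I_K -> R) : R :=
  N%:R * (u i + expR (- u i)
          + (K.-1)%:R * expR (\sum_(d < D) x i d * (W d k - W d (y i)) - u i))
  + mu / 2 * (beta y (y i) * \sum_(d < D) W d (y i) ^+ 2
              + beta y k * \sum_(d < D) W d k ^+ 2).

(* f = E_{ik}[f_ik], i uniform on 'I_N, k uniform on 'I_K \ {y i} *)
Definition f_full (mu : R) x y u W : R :=
  \sum_(i < N) (N%:R^-1 *
     \sum_(k < K | k != y i) ((K.-1)%:R^-1 * f_ik mu x y i k u W)).

Definition B_W (mu : R) : R := Num.sqrt (2 / mu * N%:R * ln K%:R).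

Definition B_x (x : 'I_N -> 'I_D -> R) : R :=
  \big[Num.max/0]_(i < N) Num.sqrt (\sum_(d < D) x i d ^+ 2).

Definition B_u (mu : R) x : R :=
  ln (1 + (K.-1)%:R * expR (2 * B_x x * B_W mu)).

Definition B_f (mu : R) x y : R :=
  N%:R * Num.max 1 (expR (B_u mu x) - 1)
  + 2 * (N%:R * expR (B_u mu x) * B_x x
         + mu * (\big[Num.max/0]_(k < K) beta y k) * B_W mu).

End Defs.

(* Main.v *)
Require Import Defs.
From HB Require Import structures.
From mathcomp Require Import all_boot all_order all_algebra.
From mathcomp Require Import all_classical all_reals all_analysis.
From mathcomp Require Import ring lra.
Import Order.TTheory GRing.Theory Num.Theory.
Local Open Scope ring_scope.

Section Tools.
Variable R : realType.
Lemma dcst (c x : R) : is_derive x 1 (fun _ : R => c) 0.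
Proof. exact: is_derive_cst. Qed.
Lemma did (x : R) : is_derive x 1 (fun t : R => t) 1.
Proof. exact: is_derive_id. Qed.
Lemma dD (f g : R -> R) (x a b : R) : is_derive x 1 f a -> is_derive x 1 g b ->
  is_derive x 1 (fun t => f t + g t) (a + b).
Proof. move=> ? ?; exact: is_deriveD. Qed.
Lemma dB (f g : R -> R) (x a b : R) : is_derive x 1 f a -> is_derive x 1 g b ->
  is_derive x 1 (fun t => f t - g t) (a - b).
Proof. move=> ? ?; exact: is_deriveB. Qed.
Lemma dN (f : R -> R) (x a : R) : is_derive x 1 f a ->
  is_derive x 1 (fun t => - f t) (- a).
Proof. move=> ?; exact: is_deriveN. Qed.
Lemma dMl (c : R) (f : R -> R) (x a : R) : is_derive x 1 f a -> is_derive x 1 (fun t => c * f t) (c * a).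
Proof. move=> H. exact: (is_deriveZ c H). Qed.
Lemma dexp (f : R -> R) (x a : R) : is_derive x 1 f a -> is_derive x 1 (fun t => expR (f t)) (expR (f x) * a).
Proof. move=> H. exact: (@is_derive1_comp R expR f x (expR (f x)) a _ H). Qed.
Lemma dM (f g : R -> R) (x a b : R) : is_derive x 1 f a -> is_derive x 1 g b ->
  is_derive x 1 (fun t => f t * g t) (f x * b + g x * a).
Proof. move=> Hf Hg. exact: (is_deriveM Hf Hg). Qed.
Lemma dsq (x : R) : is_derive x 1 (fun t : R => t ^+ 2) (2 * x).
Proof.
have -> : (fun t : R => t ^+ 2) = (fun t => t * t) by apply: funext => t; rewrite expr2.
suff -> : 2 * x = x * 1 + x * 1 by exact: dM (did x) (did x).
by rewrite !mulr1 mulr_natl mulr2n.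
Qed.
Lemma deq (f : R -> R) (x a b : R) : is_derive x 1 f a -> a = b -> is_derive x 1 f b.
Proof. by move=> ? <-. Qed.
Lemma dval (f : R -> R) (x a : R) : is_derive x 1 f a -> derive1 f x = a.
Proof. by rewrite derive1E => -[_ ->]. Qed.
Lemma dsum (I : Type) (r : seq I) (P : pred I) (h : I -> R -> R) (dh : I -> R) (x : R) :
  (forall i, P i -> is_derive x 1 (h i) (dh i)) ->
  is_derive x 1 (fun t => \sum_(i <- r | P i) h i t) (\sum_(i <- r | P i) dh i).
Proof.
move=> H; elim: r => [|a r IH].
  have -> : (fun t => \sum_(i <- [::] | P i) h i t) = (fun _ => 0).
    by apply: funext => t; rewrite big_nil.
  by rewrite big_nil; exact: dcst.
case Pa: (P a).
  have -> : (fun t => \sum_(i <- a :: r | P i) h i t) = (fun t => h a t + \sum_(i <- r | P i) h i t).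
    by apply: funext => t; rewrite big_cons Pa.
  by rewrite big_cons Pa; apply: dD => //; exact: H.
have -> : (fun t => \sum_(i <- a :: r | P i) h i t) = (fun t => \sum_(i <- r | P i) h i t).
  by apply: funext => t; rewrite big_cons Pa.
by rewrite big_cons Pa.
Qed.

Lemma jensen (I : finType) (c a : I -> R) :
  (forall i, 0 <= c i) -> \sum_i c i = 1 ->
  (\sum_i c i * a i) ^+ 2 <= \sum_i c i * a i ^+ 2.
Proof.
move=> c0 c1.
have E : forall m, \sum_i c i * (a i - m) ^+ 2 =
   \sum_i c i * a i ^+ 2 + (- (2 * m)) * \sum_i c i * a i + m ^+ 2 * \sum_i c i.
  move=> m; rewrite !mulr_sumr -!big_split /=; apply: eq_bigr => i _; ring.
set m := \sum_i c i * a i.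
have H : 0 <= \sum_i c i * (a i - m) ^+ 2.
  by apply: sumr_ge0 => i _; apply: mulr_ge0 => //; exact: sqr_ge0.
rewrite E c1 -/m in H; lra.
Qed.

Lemma CS2 (n : nat) (a b : 'I_n -> R) :
  (\sum_i a i * b i) ^+ 2 <= (\sum_i a i ^+ 2) * (\sum_i b i ^+ 2).
Proof.
set A := \sum_i a i ^+ 2; set B := \sum_i b i ^+ 2; set C := \sum_i a i * b i.
have B0 : 0 <= B by apply: sumr_ge0 => i _; exact: sqr_ge0.
have E : forall B C, \sum_i (B * a i - C * b i) ^+ 2 = B ^+ 2 * \sum_i a i ^+ 2 + (- (2 * B * C)) * \sum_i a i * b i + C ^+ 2 * \sum_i b i ^+ 2.
  move=> B' C'; rewrite !mulr_sumr -!big_split /=; apply: eq_bigr => i _; ring.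
have H : 0 <= \sum_i (B * a i - C * b i) ^+ 2.
  by apply: sumr_ge0 => i _; exact: sqr_ge0.
rewrite E -/A -/B -/C in H.
have [B0z|Bpos] := eqVneq B 0.
  have bz : forall i, b i = 0.
    move=> i; apply/eqP; rewrite -sqrf_eq0; apply/eqP.
    have /psumr_eq0P := B0z; apply => // j _; exact: sqr_ge0.
  have -> : C = 0 by rewrite /C big1 // => i _; rewrite bz mulr0.
  by rewrite B0z expr0n /= mulr0.
have Bp : 0 < B by rewrite lt_def Bpos B0.
have : 0 <= B * (A * B - C ^+ 2) by nra.
rewrite pmulr_rge0 // subr_ge0 => /le_trans; apply; rewrite mulrC //.
Qed.
End Tools.

Section Tools2.
Variable R : realType.
Lemma CSabs (n : nat) (a b : 'I_n -> R) :
  `|\sum_i a i * b i| <= Num.sqrt (\sum_i a i ^+ 2) * Num.sqrt (\sum_i b i ^+ 2).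
Proof.
have A0 : 0 <= \sum_i a i ^+ 2 by apply: sumr_ge0 => i _; exact: sqr_ge0.
have B0 : 0 <= \sum_i b i ^+ 2 by apply: sumr_ge0 => i _; exact: sqr_ge0.
rewrite -sqrtrM // -sqrtr_sqr ler_sqrt; last exact: mulr_ge0.
exact: CS2.
Qed.

Lemma mink (n : nat) (al be : R) (a b : 'I_n -> R) :
  \sum_i (al * a i + be * b i) ^+ 2 <=
  (`|al| * Num.sqrt (\sum_i a i ^+ 2) + `|be| * Num.sqrt (\sum_i b i ^+ 2)) ^+ 2.
Proof.
have A0 : 0 <= \sum_i a i ^+ 2 by apply: sumr_ge0 => i _; exact: sqr_ge0.
have B0 : 0 <= \sum_i b i ^+ 2 by apply: sumr_ge0 => i _; exact: sqr_ge0.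
have E : \sum_i (al * a i + be * b i) ^+ 2 =
  al ^+ 2 * \sum_i a i ^+ 2 + (2 * al * be) * \sum_i a i * b i + be ^+ 2 * \sum_i b i ^+ 2.
  rewrite !mulr_sumr -!big_split /=; apply: eq_bigr => i _; ring.
rewrite E.
have C := @CSabs n a b.
set A := Num.sqrt _ in C *; set B := Num.sqrt _ in C *.
set S := \sum_i a i * b i in C *.
have A2 : \sum_i a i ^+ 2 = A ^+ 2 by rewrite sqr_sqrtr.
have B2 : \sum_i b i ^+ 2 = B ^+ 2 by rewrite sqr_sqrtr.
rewrite A2 B2 -(real_normK (num_real al)) -(real_normK (num_real be)).
have T : al * be * S <= `|al| * `|be| * (A * B).
  apply: le_trans (ler_norm _) _; rewrite !normrM.
  apply: ler_wpM2l; first exact: mulr_ge0.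
  done.
have Ap : 0 <= A := sqrtr_ge0 _. have Bp : 0 <= B := sqrtr_ge0 _.
nra.
Qed.
End Tools2.

Section Main.
Variable R : realType.
Variables N D K : nat.
Variables (mu : R) (x : 'I_N -> 'I_D -> R) (y : 'I_N -> 'I_K) (u : 'I_N -> R) (W : 'I_D -> 'I_K -> R).

Definition zz i k := \sum_(d < D) x i d * (W d k - W d (y i)).
Definition EE i k : R := (K.-1)%:R * expR (zz i k - u i).
Definition gu i k (j : 'I_N) : R :=
  if j == i then N%:R * (1 - expR (- u i) - EE i k) else 0.
Definition gW i (k : 'I_K) (d0 : 'I_D) (k0 : 'I_K) : R :=
  N%:R * EE i k * (x i d0 * ((k == k0)%:R - (y i == k0)%:R))
  + mu * W d0 k0 * (beta R y (y i) * (y i == k0)%:R + beta R y k * (k == k0)%:R).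

Lemma du i k j : is_derive (u j) 1 (fun t => f_ik mu x y i k (updu u j t) W) (gu i k j).
Proof.
rewrite /gu; case: (eqVneq j i) => [->|ne].
  have -> : (fun t => f_ik mu x y i k (updu u i t) W) = (fun t => N%:R * (t + expR (- t) + (K.-1)%:R * expR (zz i k - t)) + (mu / 2 * (beta R y (y i) * \sum_(d < D) W d (y i) ^+ 2 + beta R y k * \sum_(d < D) W d k ^+ 2))).
    by apply: funext => t; rewrite /f_ik /updu eqxx.
  apply: deq; rewrite /EE -![_ *: _]/(_ * _); ring.
have ne' : (i == j) = false by rewrite eq_sym (negbTE ne).
have -> : (fun t => f_ik mu x y i k (updu u j t) W) = (fun _ => f_ik mu x y i k u W).
  by apply: funext => t; rewrite /f_ik /updu ne'.
exact: dcst.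
Qed.

Lemma updWE d0 k0 t d k : updW W d0 k0 t d k = W d k + ((d == d0) && (k == k0))%:R * (t - W d0 k0).
Proof.
rewrite /updW; case: (eqVneq d d0) => [->|_] /=; last by rewrite mul0r addr0.
case: (eqVneq k k0) => [->|_] /=; last by rewrite mul0r addr0.
by rewrite mul1r addrC subrK.
Qed.

Lemma zW i k d0 k0 t : \sum_(d < D) x i d * (updW W d0 k0 t d k - updW W d0 k0 t d (y i))
  = zz i k + (t - W d0 k0) * (x i d0 * ((k == k0)%:R - (y i == k0)%:R)).
Proof.
rewrite /zz (bigD1 d0) //= [in RHS](bigD1 d0) //=.
rewrite (eq_bigr (fun d => x i d * (W d k - W d (y i)))); last first.
  by move=> d /negbTE nd; rewrite !updWE nd /= !mul0r !addr0.
rewrite !updWE eqxx /=; ring.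
Qed.

Lemma sqW k d0 k0 t : \sum_(d < D) updW W d0 k0 t d k ^+ 2
  = \sum_(d < D) W d k ^+ 2 + (k == k0)%:R * (t ^+ 2 - W d0 k0 ^+ 2).
Proof.
rewrite (bigD1 d0) //= [in RHS](bigD1 d0) //=.
rewrite (eq_bigr (fun d => W d k ^+ 2)); last first.
  by move=> d /negbTE nd; rewrite !updWE nd /= !mul0r !addr0.
rewrite !updWE eqxx /=; case: (eqVneq k k0) => [->|_] /=; last by rewrite !mul0r !addr0.
rewrite !mul1r; ring.
Qed.

Lemma dW i k d0 k0 : is_derive (W d0 k0) 1 (fun t => f_ik mu x y i k u (updW W d0 k0 t)) (gW i k d0 k0).
Proof.
have -> : (fun t => f_ik mu x y i k u (updW W d0 k0 t)) = (fun t => N%:R * (u i + expR (- u i) + (K.-1)%:R * expR (zz i k + (t - W d0 k0) * (x i d0 * ((k == k0)%:R - (y i == k0)%:R)) - u i)) + mu / 2 * (beta R y (y i) * (\sum_(d < D) W d (y i) ^+ 2 + (y i == k0)%:R * (t ^+ 2 - W d0 k0 ^+ 2)) + beta R y k * (\sum_(d < D) W d k ^+2 + (k == k0)%:R * (t^+2 - W d0 k0^+2)))).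
  by apply: funext => t; rewrite /f_ik zW !sqW.
apply: deq.
have E : zz i k + (W d0 k0 - W d0 k0) * (x i d0 * ((k == k0)%:R - (y i == k0)%:R)) - u i = zz i k - u i.
  by rewrite subrr mul0r addr0.
rewrite -![_ *: _]/(_ * _) E /gW /EE. by field.
Qed.

Lemma G2ik i k : grad_norm2 (f_ik mu x y i k) u W =
  \sum_j gu i k j ^+ 2 + \sum_(d < D) \sum_(k0 < K) gW i k d k0 ^+ 2.
Proof.
rewrite /grad_norm2; congr (_ + _).
  by apply: eq_bigr => j _; rewrite (@dval _ _ _ _ (du i k j)).
by apply: eq_bigr => d _; apply: eq_bigr => k0 _; rewrite (@dval _ _ _ _ (dW i k d k0)).
Qed.

Definition w (i : 'I_N) (k : 'I_K) : R := N%:R^-1 * (if k != y i then (K.-1)%:R^-1 else 0).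

Lemma w0 i k : 0 <= w i k.
Proof. rewrite /w; apply: mulr_ge0; first by rewrite invr_ge0.
by case: ifP => _ //; rewrite invr_ge0. Qed.

Lemma ffullE u' W' : f_full mu x y u' W' = \sum_i \sum_k w i k * f_ik mu x y i k u' W'.
Proof.
rewrite /f_full; apply: eq_bigr => i _; rewrite big_mkcond mulr_sumr; apply: eq_bigr => k _.
by rewrite /w; case: ifP => _; rewrite ?mulr0 ?mul0r ?mulrA.
Qed.

Lemma dfu j : is_derive (u j) 1 (fun t => f_full mu x y (updu u j t) W)
  (\sum_i \sum_k w i k * gu i k j).
Proof.
have -> : (fun t => f_full mu x y (updu u j t) W) =
  (fun t => \sum_i \sum_k w i k * f_ik mu x y i k (updu u j t) W).
  by apply: funext => t; rewrite ffullE.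
apply: dsum => i _; apply: dsum => k _; apply: dMl; exact: du.
Qed.

Lemma dfW d0 k0 : is_derive (W d0 k0) 1 (fun t => f_full mu x y u (updW W d0 k0 t))
  (\sum_i \sum_k w i k * gW i k d0 k0).
Proof.
have -> : (fun t => f_full mu x y u (updW W d0 k0 t)) =
  (fun t => \sum_i \sum_k w i k * f_ik mu x y i k u (updW W d0 k0 t)).
  by apply: funext => t; rewrite ffullE.
apply: dsum => i _; apply: dsum => k _; apply: dMl; exact: dW.
Qed.

Lemma wsum : (0 < N)%N -> (2 <= K)%N -> \sum_i \sum_k w i k = 1.
Proof.
move=> hN hK.
have K0 : (K.-1)%:R != 0 :> R by rewrite pnatr_eq0 -lt0n; case: K hK => [|[|]].
have N0 : N%:R != 0 :> R by rewrite pnatr_eq0 -lt0n.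
under eq_bigr => i _.
  rewrite /w -mulr_sumr -big_mkcond /= sumr_const cardC1 card_ord -[_ *+ K.-1]mulr_natr mulVf //.
  rewrite mulr1; over.
by rewrite sumr_const card_ord -[_ *+ N]mulr_natr mulVf.
Qed.

Lemma full_bound (B : R) : (0 < N)%N -> (2 <= K)%N ->
  (forall i k, k != y i -> grad_norm2 (f_ik mu x y i k) u W <= B) ->
  grad_norm2 (f_full mu x y) u W <= B.
Proof.
move=> hN hK H.
have ws : \sum_(p : 'I_N * 'I_K) w p.1 p.2 = 1 by rewrite -(wsum hN hK) pair_bigA.
rewrite /grad_norm2.
rewrite (eq_bigr (fun j => (\sum_(p : 'I_N * 'I_K) w p.1 p.2 * gu p.1 p.2 j) ^+ 2)); last first.
  by move=> j _; rewrite (@dval _ _ _ _ (dfu j)) pair_bigA.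
rewrite (eq_bigr (fun d => \sum_k0 (\sum_(p : 'I_N * 'I_K) w p.1 p.2 * gW p.1 p.2 d k0) ^+ 2)); last first.
  by move=> d _; apply: eq_bigr => k0 _; rewrite (@dval _ _ _ _ (dfW d k0)) pair_bigA.
apply: le_trans (_ : \sum_j \sum_(p : 'I_N * 'I_K) w p.1 p.2 * gu p.1 p.2 j ^+ 2
   + \sum_(d < D) \sum_(k0 < K) \sum_(p : 'I_N * 'I_K) w p.1 p.2 * gW p.1 p.2 d k0 ^+ 2 <= _).
  apply: lerD; [apply: ler_sum => j _ | apply: ler_sum => d _; apply: ler_sum => k0 _];
    (apply: jensen; [move=> p; exact: w0 | exact: ws]).
have E : \sum_(p : 'I_N * 'I_K) w p.1 p.2 * grad_norm2 (f_ik mu x y p.1 p.2) u W =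
   \sum_j \sum_(p : 'I_N * 'I_K) w p.1 p.2 * gu p.1 p.2 j ^+ 2
   + \sum_(d < D) \sum_(k0 < K) \sum_(p : 'I_N * 'I_K) w p.1 p.2 * gW p.1 p.2 d k0 ^+ 2.
  under eq_bigr => p _ do rewrite G2ik mulrDr !mulr_sumr.
  rewrite big_split /=; congr (_ + _); first by rewrite exchange_big.
  rewrite exchange_big; apply: eq_bigr => d _; under eq_bigr => p _ do rewrite mulr_sumr; by rewrite exchange_big.
rewrite -E.
apply: le_trans (_ : \sum_(p : 'I_N * 'I_K) w p.1 p.2 * B <= _).
  apply: ler_sum => p _; case: (eqVneq p.2 (y p.1)) => [e|ne].
    by rewrite /w e eqxx /= mulr0 !mul0r.
  by apply: ler_wpM2l; [exact: w0 | exact: H].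
by rewrite -mulr_suml ws mul1r.
Qed.

Lemma beta_ge0 k : 0 <= beta R y k.
Proof. by rewrite /beta divr_ge0 // addr_ge0 // divr_ge0. Qed.

Lemma colB k : sqnormW W <= B_W N K mu ^+ 2 ->
  Num.sqrt (\sum_(d < D) W d k ^+ 2) <= B_W N K mu.
Proof.
move=> hW.
have BW0 : 0 <= B_W N K mu by exact: sqrtr_ge0.
rewrite -(ger0_norm BW0) -sqrtr_sqr ler_sqrt; last exact: sqr_ge0.
apply: le_trans hW; rewrite /sqnormW; apply: ler_sum => d _.
rewrite (bigD1 k) //= lerDl; apply: sumr_ge0 => j _; exact: sqr_ge0.
Qed.

Lemma bound_ik i k : k != y i -> 0 < mu -> sqnormW W <= B_W N K mu ^+ 2 -> 0 <= u i ->
  grad_norm2 (f_ik mu x y i k) u W <= B_f mu x y ^+ 2.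
Proof.
move=> ne hmu hW hu.
set X := Num.sqrt (\sum_(d < D) x i d ^+ 2).
set Wk := Num.sqrt (\sum_(d < D) W d k ^+ 2).
set Wy := Num.sqrt (\sum_(d < D) W d (y i) ^+ 2).
set BX := B_x x. set BW := B_W N K mu. set Bu := B_u K mu x.
set bmax := \big[Num.max/0]_(k < K) beta R y k.
have X0 : 0 <= X := sqrtr_ge0 _.
have Wk0 : 0 <= Wk := sqrtr_ge0 _.
have Wy0 : 0 <= Wy := sqrtr_ge0 _.
have BW0 : 0 <= BW := sqrtr_ge0 _.
have XB : X <= BX by rewrite /X /BX /B_x; exact: (le_bigmax _ (fun i => Num.sqrt (\sum_(d < D) x i d ^+ 2)) i).
have BX0 : 0 <= BX := le_trans X0 XB.
have WkB : Wk <= BW := colB k hW.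
have WyB : Wy <= BW := colB (y i) hW.
have zB : zz i k <= 2 * BX * BW.
  have -> : zz i k = \sum_d x i d * W d k + \sum_d x i d * (- W d (y i)).
    by rewrite /zz -big_split; apply: eq_bigr => d _ /=; ring.
  have C1 := le_trans (ler_norm _) (@CSabs _ D (x i) (fun d => W d k)).
  have C2 := le_trans (ler_norm _) (@CSabs _ D (x i) (fun d => - W d (y i))).
  rewrite -/X -/Wk in C1.
  have E : \sum_d (- W d (y i)) ^+ 2 = \sum_d W d (y i) ^+ 2 by apply: eq_bigr => d _; rewrite sqrrN.
  rewrite E -/X -/Wy in C2.
  nra.
have cK : 0 <= (K.-1)%:R :> R by [].
have EE0 : 0 <= EE i k by rewrite /EE mulr_ge0 // expR_ge0.
have eBu : expR Bu = 1 + (K.-1)%:R * expR (2 * BX * BW).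
  rewrite /Bu /B_u lnK // posrE; have := expR_ge0 (2 * BX * BW).
  move=> h; have : 0 <= (K.-1)%:R * expR (2 * BX * BW) by rewrite mulr_ge0.
  lra.
have EEB : EE i k <= expR Bu - 1.
  rewrite eBu (addrC 1) addrK /EE; apply: ler_wpM2l => //; rewrite ler_expR; lra.
have em0 : 0 < expR (- u i) := expR_gt0 _.
have em1 : expR (- u i) <= 1 by rewrite -expR0 ler_expR; lra.
set M := Num.max 1 (expR Bu - 1).
have M1 : 1 <= M by rewrite /M le_max lexx.
have M2 : expR Bu - 1 <= M by rewrite /M le_max lexx orbT.
set NM := N%:R * M.
have NM0 : 0 <= NM by rewrite /NM mulr_ge0 //; lra.
set S := N%:R * expR Bu * BX + mu * bmax * BW.
have eB0 : 0 <= expR Bu := expR_ge0 _.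
have bk0 := beta_ge0 k.
have bkm : beta R y k <= bmax by rewrite /bmax; exact: (le_bigmax _ (fun k => beta R y k) k).
have by0 := beta_ge0 (y i).
have bym : beta R y (y i) <= bmax by rewrite /bmax; exact: (le_bigmax _ (fun k => beta R y k) (y i)).
have bmax0 : 0 <= bmax := le_trans bk0 bkm.
have NEEX : `|N%:R * EE i k| * X <= N%:R * expR Bu * BX.
  rewrite ger0_norm ?mulr_ge0 //; apply: ler_pM => //; first exact: mulr_ge0.
  apply: ler_wpM2l => //; lra.
have S0 : 0 <= S by rewrite /S addr_ge0 // mulr_ge0 // mulr_ge0 // ltW.
have uP : \sum_j gu i k j ^+ 2 <= NM ^+ 2.
  rewrite (bigD1 i) //= big1 ?addr0; last first.
    by move=> j /negbTE nj; rewrite /gu nj expr2 mul0r.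
  rewrite /gu eqxx /NM !exprMn; apply: ler_wpM2l; first exact: sqr_ge0.
  nra.
have eyk : (y i == k) = false by rewrite eq_sym; exact: negbTE.
have ekyi : (k == y i) = false by exact: negbTE.
have WP : \sum_(d < D) \sum_(k0 < K) gW i k d k0 ^+ 2 =
   \sum_d (N%:R * EE i k * x i d + mu * beta R y k * W d k) ^+ 2 +
   \sum_d ((- (N%:R * EE i k)) * x i d + mu * beta R y (y i) * W d (y i)) ^+ 2.
  rewrite -big_split; apply: eq_bigr => d _ /=.
  rewrite (bigD1 k) //= (bigD1 (y i)) /=; last by rewrite eq_sym.
  rewrite big1 ?addr0; last first.
    move=> k0 /andP [h1 h2].
    have e1 : (k == k0) = false by rewrite eq_sym; exact: negbTE.
    have e2 : (y i == k0) = false by rewrite eq_sym; exact: negbTE.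
    by rewrite /gW e1 e2 /=; apply/eqP; rewrite sqrf_eq0; apply/eqP; ring.
  rewrite /gW !eqxx eyk ekyi /=; congr (_ ^+ 2 + _ ^+ 2); ring.
have P1 := @mink _ D (N%:R * EE i k) (mu * beta R y k) (x i) (fun d => W d k).
have P2 := @mink _ D (- (N%:R * EE i k)) (mu * beta R y (y i)) (x i) (fun d => W d (y i)).
rewrite -/X -/Wk in P1; rewrite -/X -/Wy normrN in P2.
have Q1 : `|mu * beta R y k| * Wk <= mu * bmax * BW.
  rewrite ger0_norm ?mulr_ge0 ?(ltW hmu) //; apply: ler_pM => //; first by rewrite mulr_ge0 // ltW.
  by apply: ler_wpM2l => //; exact: ltW.
have Q2 : `|mu * beta R y (y i)| * Wy <= mu * bmax * BW.
  rewrite ger0_norm ?mulr_ge0 ?(ltW hmu) //; apply: ler_pM => //; first by rewrite mulr_ge0 // ltW.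
  by apply: ler_wpM2l => //; exact: ltW.
have R1 : 0 <= `|mu * beta R y k| * Wk by rewrite mulr_ge0.
have R2 : 0 <= `|mu * beta R y (y i)| * Wy by rewrite mulr_ge0.
have R3 : 0 <= `|N%:R * EE i k| * X by rewrite mulr_ge0.
have T1 : \sum_d (N%:R * EE i k * x i d + mu * beta R y k * W d k) ^+ 2 <= S ^+ 2.
  apply: le_trans P1 _; rewrite /S; nra.
have T2 : \sum_d ((- (N%:R * EE i k)) * x i d + mu * beta R y (y i) * W d (y i)) ^+ 2 <= S ^+ 2.
  apply: le_trans P2 _; rewrite /S; nra.
rewrite G2ik WP.
have -> : B_f mu x y = NM + 2 * S by [].
nra.
Qed.

End Main.

Theorem lemma4 (R : realType) (N D K : nat) (hN : (0 < N)%N) (hK : (2 <= K)%N)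
  (x : 'I_N -> 'I_D -> R) (y : 'I_N -> 'I_K) (mu : R) (hmu : 0 < mu)
  (u : 'I_N -> R) (W : 'I_D -> 'I_K -> R)
  (hW : sqnormW W <= B_W N K mu ^+ 2)
  (hu : forall i, 0 <= u i <= B_u K mu x) :
  grad_norm (f_full mu x y) u W <= B_f mu x y
  /\ (forall (i : 'I_N) (k : 'I_K), k != y i ->
        grad_norm (f_ik mu x y i k) u W <= B_f mu x y).
Proof.
have BX0 : 0 <= B_x x by rewrite /B_x; exact: bigmax_ge_id.
have bm0 : 0 <= \big[Num.max/0]_(k < K) beta R y k by exact: bigmax_ge_id.
have BW0 : 0 <= B_W N K mu := sqrtr_ge0 _.
have Bf0 : 0 <= B_f mu x y.
  rewrite /B_f; apply: addr_ge0.
    apply: mulr_ge0 => //; apply: le_trans ler01 _; by rewrite le_max lexx.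
  apply: mulr_ge0 => //; apply: addr_ge0; first by rewrite !mulr_ge0 // expR_ge0.
  by rewrite !mulr_ge0 // ltW.
have sq : forall F, grad_norm2 F u W <= B_f mu x y ^+ 2 -> grad_norm F u W <= B_f mu x y.
  move=> F h; rewrite /grad_norm -(ger0_norm Bf0) -sqrtr_sqr ler_sqrt //; exact: sqr_ge0.
have hik : forall i k, k != y i -> grad_norm2 (f_ik mu x y i k) u W <= B_f mu x y ^+ 2.
  move=> i k ne; apply: bound_ik => //; by case/andP: (hu i).
split.
  by apply: sq; apply: full_bound.
by move=> i k ne; apply: sq; exact: hik.
Qed.
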